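(* If $s\ge4$ and $s$ is even, then $\mathrm{ex}(n,P^{(3)}_s)\ge\left(1-\frac{4}{(s-2)s}+o(1)\right)\binom{n}{3}$, where $o(1)\to0$ as $n\to\infty$ with $s$ fixed.
   Context: An ordered $3$-uniform hypergraph is a $3$-uniform hypergraph with linearly ordered vertex set; $G$ contains $H$ if there is an order-preserving injection $f:V(H)\to V(G)$ with $f(e)\in E(G)$ for all $e\in E(H)$. $\mathrm{ex}(n,H)$ is the maximum number of edges of an $n$-vertex ordered $3$-uniform hypergraph not containing $H$. $P^{(3)}_s$ has vertices $v_1<\dots<v_s$ and edges $\{v_j,v_{j+1},v_{j+2}\}$ for $1\le j\le s-2$. *)

(* Defs.v *)
From mathcomp Require Import all_boot all_order all_algebra.
Set Implicit Arguments. Unset Strict Implicit. Unset Printing Implicit Defensive.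
Import Order.TTheory GRing.Theory Num.Theory.

(* An ordered 3-uniform hypergraph on n vertices: vertex set 'I_n with its
   natural (linear) order; edge set E : {set {set 'I_n}}, every edge of size 3. *)
Definition uniform3 (n : nat) (E : {set {set 'I_n}}) : bool :=
  [forall e in E, #|e| == 3].

Definition contains (n k : nat) (G : {set {set 'I_n}}) (H : {set {set 'I_k}}) : bool :=
  [exists f : {ffun 'I_k -> 'I_n},
     [forall i : 'I_k, forall j : 'I_k, (i < j)%N ==> (f i < f j)%N] &&
     [forall e in H, (f @: e) \in G]].

Definition ex (k : nat) (H : {set {set 'I_k}}) (n : nat) : nat :=
  \max_(E : {set {set 'I_n}} | uniform3 E && ~~ contains E H) #|E|.

Definition tight_path (s : nat) : {set {set 'I_s}} :=
  [set e : {set 'I_s} | [exists i : 'I_s,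
      ((i : nat).+2 < s)%N && (e == [set x : 'I_s | ((i : nat) <= x <= (i : nat).+2)%N])]].

(* Main.v *)
Require Import Defs.
From mathcomp Require Import all_boot all_order all_algebra zify ring lra.
Set Implicit Arguments. Unset Strict Implicit. Unset Printing Implicit Defensive.


Definition Wt (k J : nat) : nat :=
  if J < 2 * k-2 then (if J %% 2 == 1 then J %/ 2 + 1 else k - 1 - J %/ 2) else 0.
Definition wt k Q p := Wt k (p %/ Q).
Definition Sx k Q p := \sum_(0 <= i < p) wt k Q i.
Definition PP k Q := (2 * k-2) * Q.
Definition pos k Q X := \max_(p < PP k Q | Sx k Q p <= X) (p : nat).
Definition lev k Q x y := (pos k Q x + pos k Q y) %/ (2 * Q).

Lemma Wt_pos k J : 2 <= k -> J < 2 * k-2 -> 0 < Wt k J.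
Proof. move=> hk hJ; rewrite /Wt hJ; case: eqP => H; lia. Qed.

Lemma Wt_big k J : 2 * k-2 <= J -> Wt k J = 0.
Proof. by rewrite /Wt => h; rewrite ltnNge h. Qed.

Lemma sum_pairs (F : nat -> nat) m :
  \sum_(0 <= J < 2 * m) F J = \sum_(0 <= i < m) (F (2 * i) + F (2 * i+1)).
Proof.
elim: m => [|m IH]; first by rewrite !big_geq.
rewrite [in RHS]big_nat_recr //= -IH.
have -> : 2 * m.+1 = (2 * m).+1.+1 by lia.
rewrite big_nat_recr //= big_nat_recr //= -addnA.
by have -> : 2 * m+1 = (2 * m).+1 by lia.
Qed.

Lemma Wt_sum k : 2 <= k -> \sum_(0 <= J < 2 * k-2) Wt k J = k * (k-1).
Proof.
move=> hk; have -> : 2 * k-2 = 2 * (k-1) by lia.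
rewrite sum_pairs (eq_big_nat _ _ (F2 := fun=> k)).
  by rewrite sum_nat_const_nat subn0 mulnC.
move=> i /andP[_ hi]; rewrite /Wt.
have -> : 2 * i < 2 * k-2 by lia.
have -> : 2 * i+1 < 2 * k-2 by lia.
have -> : (2 * i) %% 2 == 1 = false by apply/eqP; lia.
have -> : (2 * i+1) %% 2 == 1 by apply/eqP; lia.
lia.
Qed.

Lemma sum_blocks (F : nat -> nat) m Q :
  \sum_(0 <= p < m * Q) F p = \sum_(0 <= J < m) \sum_(0 <= t < Q) F (J * Q + t).
Proof.
elim: m => [|m IH]; first by rewrite mul0n !big_geq.
rewrite [in RHS]big_nat_recr //= -IH.
have -> : m.+1 * Q = m * Q + Q by rewrite mulSn addnC.
rewrite (big_cat_nat _ (n := m * Q)) //=; last by lia.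
congr (_ + _).
rewrite -{1}(add0n (m * Q)) big_addn addKn.
by apply: eq_big_nat => i _; rewrite addnC.
Qed.

Lemma div_eqJ i Q J : J * Q <= i < J * Q + Q -> i %/ Q = J.
Proof.
move=> /andP[h1 h2].
have hQ : 0 < Q by lia.
have -> : i = J * Q + (i - J * Q) by lia.
rewrite divnMDl // divn_small ?addn0 //; lia.
Qed.

Lemma wt_block k Q J t : t < Q -> wt k Q (J * Q + t) = Wt k J.
Proof. move=> ht; rewrite /wt (@div_eqJ _ _ J) //; lia. Qed.

Lemma Sx_succ k Q p : Sx k Q p.+1 = Sx k Q p + wt k Q p.
Proof. by rewrite /Sx big_nat_recr. Qed.

Lemma Sx_mono k Q p q : p <= q -> Sx k Q p <= Sx k Q q.
Proof. by move=> h; rewrite /Sx [X in _ <= X](big_cat_nat _ (n := p)) //= leq_addr. Qed.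

Lemma Sx_diff k Q p q : p <= q -> Sx k Q q - Sx k Q p = \sum_(p <= i < q) wt k Q i.
Proof. by move=> h; rewrite /Sx (big_cat_nat _ (n := p) (p := q)) //= addKn. Qed.

Lemma wt_pos k Q p : 2 <= k -> 0 < Q -> p < PP k Q -> 0 < wt k Q p.
Proof.
move=> hk hQ hp; apply: Wt_pos => //; rewrite ltn_divLR //.
Qed.

Lemma wt_big k Q p : 0 < Q -> PP k Q <= p -> wt k Q p = 0.
Proof. by move=> hQ hp; apply: Wt_big; rewrite leq_divRL. Qed.

Lemma Sx_strict k Q p : 2 <= k -> 0 < Q -> p < PP k Q -> Sx k Q p < Sx k Q p.+1.
Proof. by move=> hk hQ hp; rewrite Sx_succ -addn1 leq_add2l wt_pos. Qed.

Lemma Sx_after k Q p : 0 < Q -> PP k Q <= p -> Sx k Q p = Sx k Q (PP k Q).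
Proof.
move=> hQ; elim: p => [|p IH] h.
  by move: h; rewrite leqn0 => /eqP ->.
case: (ltngtP (PP k Q) p.+1) => [h'|h'|->//]; last by lia.
by rewrite Sx_succ IH ?wt_big ?addn0 //; lia.
Qed.

Lemma Sx_le k Q p : 0 < Q -> Sx k Q p <= Sx k Q (PP k Q).
Proof.
move=> hQ; case: (leqP p (PP k Q)) => h; first exact: Sx_mono.
by rewrite Sx_after // ltnW.
Qed.

Lemma Sx_PP k Q : 2 <= k -> 0 < Q -> Sx k Q (PP k Q) = k * (k-1) * Q.
Proof.
move=> hk hQ; rewrite /Sx /PP sum_blocks.
rewrite (eq_big_nat _ _ (F2 := fun J => Q * Wt k J)).
  by rewrite -big_distrr /= Wt_sum // mulnC.
move=> J _; rewrite (eq_big_nat _ _ (F2 := fun=> Wt k J)).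
  by rewrite sum_nat_const_nat subn0.
by move=> t /andP[_ ht]; rewrite wt_block.
Qed.

Section Pos.
Variables (k Q : nat).
Hypotheses (hk : 2 <= k) (hQ : 0 < Q).

Lemma PP_pos : 0 < PP k Q.
Proof. rewrite /PP muln_gt0 hQ andbT; lia. Qed.

Lemma pos_spec X : exists i0 : 'I_(PP k Q), Sx k Q i0 <= X /\ pos k Q X = i0.
Proof.
have h : 0 < #|[pred p : 'I_(PP k Q) | Sx k Q p <= X]|.
  apply/card_gt0P; exists (Ordinal PP_pos); by rewrite inE /Sx big_geq.
case: (eq_bigmax_cond (fun p : 'I_(PP k Q) => (p : nat)) h) => i0 hi0 e.
exists i0; split; first by move: hi0; rewrite inE.
by rewrite /pos e.
Qed.

Lemma pos_lt X : pos k Q X < PP k Q.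
Proof. by case: (pos_spec X) => i0 [_ ->]. Qed.

Lemma Sx_pos X : Sx k Q (pos k Q X) <= X.
Proof. by case: (pos_spec X) => i0 [h ->]. Qed.

Lemma pos_max X p : p < PP k Q -> Sx k Q p <= X -> p <= pos k Q X.
Proof.
move=> hp hS; rewrite /pos.
exact: (@leq_bigmax_cond _ (fun p : 'I_(PP k Q) => Sx k Q p <= X) (fun p : 'I_(PP k Q) => (p : nat)) (Ordinal hp)).
Qed.

Lemma pos_S X : X < Sx k Q (PP k Q) -> X < Sx k Q (pos k Q X).+1.
Proof.
move=> hX; case: (ltnP (pos k Q X).+1 (PP k Q)) => h.
  rewrite ltnNge; apply/negP => hS.
  by move: (pos_max h hS); rewrite ltnn.
have -> : (pos k Q X).+1 = PP k Q by move: (pos_lt X); lia.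
done.
Qed.

Lemma pos_eq X p : p < PP k Q -> Sx k Q p <= X < Sx k Q p.+1 -> pos k Q X = p.
Proof.
move=> hp /andP[h1 h2]; apply/eqP; rewrite eqn_leq pos_max // andbT.
rewrite leqNgt; apply/negP => h.
have := Sx_mono k Q h; have := Sx_pos X; lia.
Qed.

Lemma pos_mono a b : a <= b -> pos k Q a <= pos k Q b.
Proof. move=> h; apply: pos_max; [exact: pos_lt | exact: leq_trans (Sx_pos a) h]. Qed.

Lemma pos_ge lo X : lo <= pos k Q X -> Sx k Q lo <= X.
Proof. move=> h; exact: leq_trans (Sx_mono k Q h) (Sx_pos X). Qed.

Lemma pos_le hi X : X < Sx k Q (PP k Q) -> pos k Q X < hi -> X < Sx k Q hi.
Proof. move=> hX h; exact: leq_trans (pos_S hX) (Sx_mono k Q h). Qed.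

Lemma regroup (F : nat -> nat) m : m <= PP k Q ->
  \sum_(0 <= X < Sx k Q m) F (pos k Q X) = \sum_(0 <= p < m) wt k Q p * F p.
Proof.
elim: m => [|m IH] hm; first by rewrite /Sx !big_geq.
rewrite Sx_succ (big_cat_nat _ (n := Sx k Q m)) ?leq_addr //= IH; last by lia.
rewrite [in RHS]big_nat_recr //=; congr (_ + _).
rewrite (eq_big_nat _ _ (F2 := fun=> F m)).
  by rewrite sum_nat_const_nat addKn.
move=> X hX; rewrite (@pos_eq X m) //; rewrite Sx_succ; lia.
Qed.

Lemma lev_lt x y : lev k Q x y < 2 * k - 2.
Proof.
rewrite /lev ltn_divLR ?muln_gt0 //.
have := pos_lt x; have := pos_lt y; rewrite /PP.
set P := (2 * k - 2) * Q => h1 h2.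
have -> : (2 * k - 2) * (2 * Q) = 2 * P by rewrite /P; rewrite mulnCA.
lia.
Qed.

Lemma lev_leJ a b : a <= b -> lev k Q a b <= pos k Q b %/ Q.
Proof.
move=> h; rewrite /lev -[X in _ <= X](@divnMl 2) //.
apply: leq_div2r; have := pos_mono h; lia.
Qed.

Lemma lev_geJ b c : b <= c -> pos k Q b %/ Q <= lev k Q b c.
Proof.
move=> h; rewrite /lev -[X in X <= _](@divnMl 2) //.
apply: leq_div2r; have := pos_mono h; lia.
Qed.

End Pos.

Lemma count_range n lo hi : \sum_(0 <= a < n) (lo <= a < hi) = minn n hi - lo.
Proof.
elim: n => [|n IH]; first by rewrite big_geq //; lia.
rewrite big_nat_recr //= IH.
case: (leqP lo n) => h1; case: (ltnP n hi) => h2 /=; lia.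
Qed.

Lemma alpha_val k J : 2 <= k -> J < 2 * k - 2 ->
  (if J == 0 then 0 else Wt k (J-1)) + Wt k J = if J %% 2 == 0 then k - 1 else k.
Proof.
move=> hk hJ; rewrite /Wt hJ.
have -> : J - 1 < 2 * k - 2 by lia.
case: eqP => h0; first by subst; rewrite /=; lia.
case: (J %% 2 =P 1) => h1; case: ((J-1) %% 2 =P 1) => h2; case: (J %% 2 =P 0) => h3; lia.
Qed.

Lemma beta_val k J : 2 <= k -> J < 2 * k - 2 ->
  Wt k J + Wt k J.+1 = if J %% 2 == 0 then k else k - 1.
Proof.
move=> hk hJ; rewrite /Wt hJ.
case: (ltnP J.+1 (2 * k - 2)) => h.
  case: (J %% 2 =P 1) => h1; case: (J.+1 %% 2 =P 1) => h2; case: (J %% 2 =P 0) => h3; lia.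
case: (J %% 2 =P 1) => h1; case: (J %% 2 =P 0) => h3; lia.
Qed.

Lemma alpha_beta k J : 2 <= k -> J < 2 * k - 2 ->
  ((if J == 0 then 0 else Wt k (J-1)) + Wt k J) * (Wt k J + Wt k J.+1) = k * (k-1).
Proof.
move=> hk hJ; rewrite alpha_val // beta_val //.
by case: eqP => _; rewrite mulnC.
Qed.

Lemma sum_wt_const k Q lo hi J : (forall i, lo <= i < hi -> i %/ Q = J) ->
  \sum_(lo <= i < hi) wt k Q i = (hi - lo) * Wt k J.
Proof.
move=> h; rewrite (eq_big_nat _ _ (F2 := fun=> Wt k J)) ?sum_nat_const_nat //.
by move=> i hi'; rewrite /wt h.
Qed.

Lemma A_bound k Q J t : 0 < Q -> t < Q ->
  Sx k Q (J * Q + t).+1 - Sx k Q (J * Q - t)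
    <= t.+1 * ((if J == 0 then 0 else Wt k (J-1)) + Wt k J).
Proof.
move=> hQ ht; rewrite Sx_diff; last by lia.
case: eqP => hJ.
  subst J; rewrite mul0n sub0n add0n (@sum_wt_const _ _ _ _ 0) ?subn0 ?add0n //.
  move=> i /andP[_ hi]; apply: divn_small; lia.
set y := J * Q.
have hy : Q <= y by rewrite /y leq_pmull; lia.
have hy1 : (J - 1) * Q = y - Q by rewrite /y mulnBl mul1n.
rewrite (big_cat_nat _ (n := y)) /=; [|lia|lia].
rewrite (@sum_wt_const _ _ _ _ (J-1)); last first.
  move=> i hi; apply: div_eqJ; rewrite hy1; lia.
rewrite (@sum_wt_const _ _ _ _ J); last first.
  move=> i hi; apply: div_eqJ; rewrite -/y; lia.
have -> : y - (y - t) = t by lia.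
have -> : (y + t).+1 - y = t.+1 by lia.
rewrite mulnDr leq_add2r leq_mul2r leqnSn orbT //.
Qed.

Lemma C_bound k Q J t : 0 < Q -> t < Q ->
  Sx k Q (J * Q + 2 * Q - t) - Sx k Q (J * Q + t)
    <= (Q - t) * (Wt k J + Wt k J.+1).
Proof.
move=> hQ ht; rewrite Sx_diff; last by lia.
set y := J * Q.
have hy1 : J.+1 * Q = y + Q by rewrite /y mulSn addnC.
rewrite (big_cat_nat _ (n := y + Q)) /=; [|lia|lia].
rewrite (@sum_wt_const _ _ _ _ J); last first.
  move=> i hi; apply: div_eqJ; rewrite -/y; lia.
rewrite (@sum_wt_const _ _ _ _ J.+1); last first.
  move=> i hi; apply: div_eqJ; rewrite hy1; lia.
have -> : y + Q - (y + t) = Q - t by lia.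
have -> : y + 2 * Q - t - (y + Q) = Q - t by lia.
by rewrite mulnDr.
Qed.

Lemma sum_tri m : \sum_(0 <= b < m) b * (m - b.+1) = 'C(m, 3).
Proof.
elim: m => [|m IH]; first by rewrite big_geq.
rewrite big_nat_recr //= subnn muln0 addn0 binS -IH -bin2_sum -big_split /=.
apply: eq_big_nat => b /andP[_ hb].
have -> : m.+1 - b.+1 = (m - b.+1).+1 by lia.
by rewrite mulnS addnC.
Qed.

Lemma sum_tq Q : \sum_(0 <= t < Q) t.+1 * (Q - t) = 'C(Q.+2, 3).
Proof.
elim: Q => [|Q IH]; first by rewrite big_geq.
rewrite binS -IH -bin2_sum [X in _ = _ + X]big_nat_recl // add0n.
rewrite (eq_big_nat _ _ (F2 := fun t => t.+1 * (Q - t) + t.+1)); last first.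
  move=> t /andP[_ ht]; have -> : Q.+1 - t = (Q - t).+1 by lia.
  by rewrite mulnS addnC.
by rewrite big_split /= [X in X + _ = _]big_nat_recr //= subnn muln0 addn0.
Qed.

Definition goodT k Q (a b c : nat) : bool :=
  [&& a < b, b < c, c < Sx k Q (PP k Q) & lev k Q a b < lev k Q b c].
Definition badT k Q (a b c : nat) : bool :=
  [&& a < b, b < c, c < Sx k Q (PP k Q) & ~~ (lev k Q a b < lev k Q b c)].

Lemma sum_nat_zero m n (F : nat -> nat) :
  (forall i, m <= i < n -> F i = 0) -> \sum_(m <= i < n) F i = 0.
Proof. by move=> h; rewrite (eq_big_nat _ _ h) sum_nat_const_nat muln0. Qed.

Section Count.
Variables (k Q : nat).
Hypotheses (hk : 2 <= k) (hQ : 0 < Q).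
Local Notation nn := (Sx k Q (PP k Q)).
Local Notation G := (fun p => k * (k - 1) * ((p %% Q).+1 * (Q - p %% Q))).

Lemma bad_b n b : nn <= n ->
  \sum_(0 <= a < n) \sum_(0 <= c < n) badT k Q a b c
    <= (if b < nn then G (pos k Q b) else 0).
Proof.
move=> hn; case: (ltnP b nn) => hb; last first.
  rewrite big1 // => a _; rewrite big1 // => c _.
  rewrite /badT; case E: [&& _, _, _ & _] => //; move/and4P: E => [_ h1 h2 _]; lia.
set p := pos k Q b; set J := p %/ Q; set t := p %% Q.
have ht : t < Q by rewrite /t ltn_pmod.
set y := J * Q.
have hp : p = y + t by rewrite /y /t /J -divn_eq.
have hJ : J < 2 * k - 2.
  by rewrite /J ltn_divLR //; move: (pos_lt hk hQ b); rewrite /PP.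
set lo := y - t; set hi := y + 2 * Q - t.
have key : forall a c, badT k Q a b c ->
    (Sx k Q lo <= a < b) && (b.+1 <= c < Sx k Q hi).
  move=> a c /and4P[hab hbc hc hl].
  have h1 := lev_leJ hk hQ (ltnW hab); have h2 := lev_geJ hk hQ (ltnW hbc).
  rewrite -/p -/J in h1 h2.
  have e1 : J <= lev k Q a b by lia.
  have e2 : lev k Q b c < J.+1 by lia.
  move: e1; rewrite /lev leq_divRL ?muln_gt0 // => e1.
  move: e2; rewrite /lev ltn_divLR ?muln_gt0 // => e2.
  have r1 : J * (2 * Q) = 2 * y by rewrite /y mulnCA.
  have r2 : J.+1 * (2 * Q) = 2 * y + 2 * Q by rewrite mulSn r1 addnC.
  rewrite r1 -/p hp in e1; rewrite r2 -/p hp in e2.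
  rewrite hab hbc /= andbT; apply/andP; split.
    apply: pos_ge => //; rewrite /lo; lia.
  apply: pos_le => //; rewrite /hi; lia.
apply: (@leq_trans (\sum_(0 <= a < n) \sum_(0 <= c < n)
      ((Sx k Q lo <= a < b) * (b.+1 <= c < Sx k Q hi)))).
  apply: leq_sum => a _; apply: leq_sum => c _.
  by case h: (badT k Q a b c) => //; move: (key a c h) => /andP[-> ->].
rewrite (eq_big_nat _ _ (F2 := fun a => (Sx k Q lo <= a < b) *
          \sum_(0 <= c < n) (b.+1 <= c < Sx k Q hi))); last first.
  by move=> a _; rewrite big_distrr.
rewrite -big_distrl /= !count_range.
have hSp : Sx k Q p <= b := Sx_pos hk hQ b.
have hSp1 : b < Sx k Q p.+1 := pos_S hk hQ hb.
apply: (@leq_trans ((Sx k Q p.+1 - Sx k Q lo) * (Sx k Q hi - Sx k Q p))).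
  apply: leq_mul; lia.
have hA := @A_bound k Q J t hQ ht; have hC := @C_bound k Q J t hQ ht.
rewrite -/y -hp in hA; rewrite -/y -hp -/hi in hC; rewrite -/lo in hA.
apply: (leq_trans (leq_mul hA hC)).
by rewrite mulnACA alpha_beta // mulnC.
Qed.

Lemma tot_b n b : nn <= n -> b < n ->
  \sum_(0 <= a < n) \sum_(0 <= c < n) (goodT k Q a b c + badT k Q a b c)
    = b * (nn - b.+1).
Proof.
move=> hn hb.
rewrite (eq_big_nat _ _ (F2 := fun a => (0 <= a < b) *
          \sum_(0 <= c < n) (b.+1 <= c < nn))); last first.
  move=> a _; rewrite big_distrr; apply: eq_big_nat => c _ /=.
  rewrite /goodT /badT.
  by case: (a < b) (b < c) (c < nn) (lev k Q a b < lev k Q b c) => [] [] [] [].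
rewrite -big_distrl /= count_range.
have := count_range n 0 b => /= ->.
rewrite (minn_idPr (ltnW hb)) (minn_idPr hn) subn0 //.
Qed.

Lemma sum_G : \sum_(0 <= p < PP k Q) wt k Q p * G p
   = k * (k - 1) * (k * (k - 1) * 'C(Q.+2, 3)).
Proof.
rewrite /PP sum_blocks.
rewrite (eq_big_nat _ _ (F2 := fun J => Wt k J * (k * (k - 1) * 'C(Q.+2, 3)))).
  by rewrite -big_distrl /= Wt_sum // mulnC.
move=> J _; rewrite -sum_tq big_distrr /= big_distrr /=.
apply: eq_big_nat => t /andP[_ ht].
rewrite wt_block // modnMDl modn_small //.
Qed.

Lemma main_count n : nn <= n ->
  'C(nn, 3) <= \sum_(0 <= b < n) \sum_(0 <= a < n) \sum_(0 <= c < n) goodT k Q a b c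
               + k * (k - 1) * (k * (k - 1) * 'C(Q.+2, 3)).
Proof.
move=> hn.
have e1 : 'C(nn, 3) = \sum_(0 <= b < n) b * (nn - b.+1).
  rewrite -sum_tri [in RHS](big_cat_nat _ (n := nn)) //= [X in _ + X]sum_nat_zero ?addn0 //.
  move=> b /andP[hb _]; lia.
rewrite e1 (eq_big_nat _ _ (F2 := fun b => \sum_(0 <= a < n) \sum_(0 <= c < n)
      (goodT k Q a b c + badT k Q a b c))); last first.
  by move=> b /andP[_ hb]; rewrite tot_b.
rewrite (eq_big_nat _ _ (F2 := fun b => \sum_(0 <= a < n) \sum_(0 <= c < n) goodT k Q a b c
      + \sum_(0 <= a < n) \sum_(0 <= c < n) badT k Q a b c)); last first.
  by move=> b _; rewrite -big_split; apply: eq_big_nat => a _; rewrite big_split.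
rewrite big_split /= leq_add2l -sum_G.
rewrite -(regroup hk hQ G (leqnn _)).
apply: (@leq_trans (\sum_(0 <= b < n) (if b < nn then G (pos k Q b) else 0))).
  by apply: leq_sum => b _; apply: bad_b.
rewrite (big_cat_nat _ (n := nn)) //= [X in _ + X]sum_nat_zero ?addn0; last first.
  by move=> b /andP[hb _]; rewrite ltnNge hb.
by apply: eq_leq; apply: eq_big_nat => b /andP[_ ->].
Qed.

End Count.

Definition Tset n k Q : {set 'I_n * 'I_n * 'I_n} :=
  [set t : 'I_n * 'I_n * 'I_n | goodT k Q t.1.1 t.1.2 t.2].
Definition Eset n k Q : {set {set 'I_n}} :=
  [set [set t.1.1; t.1.2; t.2] | t : 'I_n * 'I_n * 'I_n in Tset n k Q].

Lemma triple_inj n (a b c a' b' c' : 'I_n) :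
  a < b -> b < c -> a' < b' -> b' < c' ->
  [set a; b; c] = [set a'; b'; c'] -> (a = a') * (b = b') * (c = c').
Proof.
move=> h1 h2 h3 h4 e.
have ma x : x \in [set a; b; c] -> a <= x /\ x <= c.
  by rewrite !inE => /orP[/orP[]|] /eqP ->; lia.
have ma' x : x \in [set a'; b'; c'] -> a' <= x /\ x <= c'.
  by rewrite !inE => /orP[/orP[]|] /eqP ->; lia.
have i1 : a \in [set a; b; c] by rewrite !inE eqxx.
have i2 : b \in [set a; b; c] by rewrite !inE eqxx orbT.
have i3 : c \in [set a; b; c] by rewrite !inE eqxx orbT.
have j1 : a' \in [set a; b; c] by rewrite e !inE eqxx.
have j3 : c' \in [set a; b; c] by rewrite e !inE eqxx orbT.
have k1 : a \in [set a'; b'; c'] by rewrite -e.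
have k3 : c \in [set a'; b'; c'] by rewrite -e.
have ea : a = a'.
  apply/val_inj/eqP; rewrite eqn_leq.
  have [q1 _] := ma' a k1; have [q2 _] := ma a' j1. by rewrite q1 q2.
have ec : c = c'.
  apply/val_inj/eqP; rewrite eqn_leq.
  have [_ q1] := ma' c k3; have [_ q2] := ma c' j3. by rewrite q1 q2.
split; [split=> // |done].
move: i2; rewrite e !inE => /orP[/orP[]|] /eqP // hb.
- by subst; move: h1; rewrite ltnn.
- by subst; move: h2; rewrite ltnn.
Qed.

Lemma card_E n k Q : #|Eset n k Q| = #|Tset n k Q|.
Proof.
apply: card_in_imset => [[[a b] c]] [[a' b'] c'].
rewrite !inE /goodT /= => /and4P[h1 h2 _ _] /and4P[h1' h2' _ _] e.
by have [[-> ->] ->] := triple_inj h1 h2 h1' h2' e.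
Qed.

Lemma card_T n k Q : #|Tset n k Q| =
  \sum_(0 <= b < n) \sum_(0 <= a < n) \sum_(0 <= c < n) goodT k Q a b c.
Proof.
have -> : \sum_(0 <= b < n) \sum_(0 <= a < n) \sum_(0 <= c < n) goodT k Q a b c
    = \sum_(a < n) \sum_(b < n) \sum_(c < n) goodT k Q a b c.
  rewrite exchange_big /= big_mkord; apply: eq_bigr => a _.
  rewrite big_mkord; apply: eq_bigr => b _; by rewrite big_mkord.
rewrite pair_big /= pair_big /= -sum1_card big_mkcond /=.
by apply: eq_bigr => [[[a b] c]] _; rewrite inE.
Qed.

Lemma uniform_E n k Q : uniform3 (Eset n k Q).
Proof.
apply/forallP => e; apply/implyP => /imsetP[[[a b] c]].
rewrite inE /goodT /= => /and4P[h1 h2 _ _] ->.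
rewrite setUC cardsU1 cards2 !inE.
have -> : (a != b) by rewrite -val_eqE /=; lia.
have -> : (c == a) = false by apply/eqP => ee; subst; lia.
have -> : (c == b) = false by apply/eqP => ee; subst; lia.
done.
Qed.

Lemma three_eq (x i : nat) : (i <= x <= i.+2) = [|| x == i, x == i.+1 | x == i.+2].
Proof. lia. Qed.

Lemma no_path s k Q n : s = 2 * k -> 2 <= k -> 0 < Q ->
  ~~ contains (Eset n k Q) (tight_path s).
Proof.
move=> hs hk hQ; case: s hs => [|s'] hs; first lia.
apply/negP => /existsP[f /andP[/forallP hinc /forallP hE]].
pose F := fun i => (f (inord i) : nat).
have Finc : forall i, i < s' -> F i < F i.+1.
  move=> i hi; have := hinc (inord i) => /forallP/(_ (inord i.+1))/implyP; apply.
  rewrite !inordK //; lia.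
have step : forall i, i.+2 < s'.+1 -> lev k Q (F i) (F i.+1) < lev k Q (F i.+1) (F i.+2).
  move=> i hi.
  pose e := [set x : 'I_s'.+1 | i <= x <= i.+2].
  have he : e \in tight_path s'.+1.
    rewrite inE; apply/existsP; exists (inord i); rewrite inordK; last lia.
    by rewrite hi eqxx.
  have := hE e; rewrite he /= => /imsetP[[[a b] c]].
  rewrite inE /goodT /= => /and4P[h1 h2 h3 h4] ee.
  have ee' : e = [set inord i; inord i.+1; inord i.+2].
    apply/setP => x; rewrite !inE -!val_eqE /= !inordK; try lia.
  rewrite ee' !imsetU !imset_set1 in ee.
  have [[ea eb] ec] := triple_inj (Finc i ltac:(lia)) (Finc i.+1 ltac:(lia)) h1 h2 ee.
  by rewrite /F ea eb ec.
have lower : forall i, i < s' -> i <= lev k Q (F i) (F i.+1).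
  elim => [//|i IH] hi.
  have h2 : i.+2 < s'.+1 by lia.
  have := step i h2; have := IH (ltnW hi); lia.
have := lower (s'.-1) (ltac:(lia)).
have := lev_lt hk hQ (F s'.-1) (F s'.-1.+1).
lia.
Qed.
Import Order.TTheory GRing.Theory Num.Theory.

Lemma poly_nat (K Q : nat) : 2 <= K -> 1 <= Q ->
  (K - 1) * (K ^ 3 * (Q + 1) ^ 3) + K * (K ^ 2 * (Q * (Q + 1) * (Q + 2)))
   <= K * ((K * Q) * (K * Q - 1) * (K * Q - 2)) + 15 * K ^ 4 * Q ^ 2.
Proof. move=> hK hQ. nia. Qed.

Lemma bin3E m : 'C(m, 3) * 6 = m * (m - 1) * (m - 2).
Proof.
have -> : 6 = 3`! by [].
rewrite bin_ffact !ffactnS ffactn0 muln1 -!subn1 -subnDA mulnA //.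
Qed.



Local Open Scope ring_scope.

Lemma final_rat (K Q n g ex : nat) (eps : rat) :
  (2 <= K)%N -> (0 < Q)%N -> 0 < eps -> 15 <= eps * Q%:R ->
  ((K - 1) * (K ^ 3 * (Q + 1) ^ 3) <= K * (6 * g) + 15 * K ^ 4 * Q ^ 2)%N ->
  (n * (n - 1) * (n - 2) <= K ^ 3 * (Q + 1) ^ 3)%N ->
  (g <= ex)%N ->
  (1 - K%:R^-1 - eps) * ('C(n, 3))%:R <= ex%:R :> rat.
Proof.
move=> hK hQ he heQ h1 h2 h3.
set c := 1 - K%:R^-1 - eps.
have hex : (g%:R : rat) <= ex%:R by rewrite ler_nat.
case: (lerP c 0) => hc.
  exact: le_trans (mulr_le0_ge0 hc (ler0n _ _)) (ler0n _ _).
apply: le_trans hex.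
set a : rat := (K ^ 3 * (Q + 1) ^ 3)%:R.
set kR : rat := K%:R; set qR : rat := Q%:R; set gR : rat := g%:R.
have hkR : 2 <= kR by rewrite /kR (ler_nat _ 2).
have hqR : 1 <= qR by rewrite /qR (ler_nat _ 1).
have hCn : ('C(n, 3))%:R * 6 <= a.
  by rewrite -(natrM _ _ 6) ler_nat bin3E.
have h1R : (kR - 1) * a <= kR * (6 * gR) + 15 * kR ^ 4 * qR ^ 2.
  have e1 : ((K - 1) * (K ^ 3 * (Q + 1) ^ 3))%:R = (kR - 1) * a :> rat.
    by rewrite natrM natrB // ltnW.
  have e2 : (K * (6 * g) + 15 * K ^ 4 * Q ^ 2)%:R = kR * (6 * gR) + 15 * kR ^ 4 * qR ^ 2 :> rat.
    rewrite /kR /gR /qR natrD !natrM; ring.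
  by rewrite -e1 -e2 ler_nat.
have ha : kR ^ 3 * qR ^ 3 <= a.
  have e3 : kR ^ 3 * qR ^ 3 = (K ^ 3 * Q ^ 3)%:R :> rat.
    rewrite /kR /qR natrM; ring.
  rewrite e3 /a ler_nat leq_mul2l; apply/orP; right.
  by rewrite leq_exp2r // addn1.
have hea : 15 * (kR ^ 3 * qR ^ 2) <= eps * a.
  apply: (@le_trans _ _ (eps * (kR ^ 3 * qR ^ 3))); last by rewrite ler_wpM2l // ltW.
  have -> : eps * (kR ^ 3 * qR ^ 3) = (kR ^ 3 * qR ^ 2) * (eps * qR) by ring.
  by rewrite mulrC ler_wpM2l // ?mulr_ge0 ?exprn_ge0 // /kR /qR ler0n.
have hdiv : a - kR^-1 * a <= 6 * gR + 15 * (kR ^ 3 * qR ^ 2).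
  have hk0 : 0 < kR by lra.
  rewrite -(ler_pM2l hk0).
  have -> : kR * (a - kR^-1 * a) = (kR - 1) * a by field; lra.
  have -> : kR * (6 * gR + 15 * (kR ^ 3 * qR ^ 2)) = kR * (6 * gR) + 15 * kR ^ 4 * qR ^ 2 by ring.
  exact: h1R.
have hca : c * a <= 6 * gR.
  have -> : c * a = a - kR^-1 * a - eps * a by rewrite /c; ring.
  lra.
have hCa : c * ('C(n, 3))%:R * 6 <= c * a.
  by rewrite -mulrA ler_wpM2l // ltW.
lra.
Qed.



Theorem corollary4p6 (s : nat) :
  (4 <= s)%N -> ~~ odd s ->
  forall eps : rat, 0 < eps ->
  exists N : nat, forall n : nat, (N <= n)%N ->
    (1 - 4 / (((s - 2)%N)%:R * s%:R) - eps) * ('C(n, 3))%:R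
      <= (ex (tight_path s) n)%:R :> rat.
Proof.
move=> hs4 hev eps he.
pose k := (s %/ 2)%N.
have hsk : s = (2 * k)%N.
  have := divn_eq s 2; have := modn2 s; rewrite (negbTE hev) /k; lia.
have hk : (2 <= k)%N by lia.
pose K := (k * (k - 1))%N.
have hK : (2 <= K)%N by rewrite /K; nia.
have hK0 : (0 < K)%N by lia.
pose M := Num.Def.archi_bound (15 / eps).
have hM : 15 / eps < M%:R by apply: archi_boundP; rewrite divr_ge0 // ltW.
exists (K * M.+1)%N => n hn.
pose Q := (n %/ K)%N.
have hQM : (M.+1 <= Q)%N by rewrite /Q leq_divRL // mulnC.
have hQ : (0 < Q)%N by lia.
have hnQ : (n < K * Q.+1)%N.
  have := divn_eq n K; have := ltn_pmod n hK0; rewrite -/Q; nia.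
have hKQ : (K * Q <= n)%N by rewrite mulnC /Q leq_divM.
have hnn : Sx k Q (PP k Q) = (K * Q)%N by rewrite Sx_PP.
have hcount := main_count hk hQ (n := n) (ltac:(rewrite hnn; exact: hKQ)).
rewrite hnn -/K in hcount.
have hex : (#|Eset n k Q| <= ex (tight_path s) n)%N.
  rewrite /ex; apply: (leq_bigmax_cond (F := fun E : {set {set 'I_n}} => #|E|)).
  by rewrite uniform_E no_path.
rewrite card_E card_T in hex.
set g := (\sum_(0 <= b < n) _)%N in hcount hex.
have e4 : 4 / (((s - 2)%N)%:R * s%:R) = (K%:R)^-1 :> rat.
  have -> : (((s - 2)%N)%:R * s%:R : rat) = 4 * K%:R.
    rewrite -natrM /K hsk.
    have -> : ((2 * k - 2) * (2 * k) = 4 * (k * (k - 1)))%N by nia.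
    by rewrite natrM.
  have hK' : (K%:R : rat) != 0 by rewrite pnatr_eq0 -lt0n.
  by field.
rewrite e4.
apply: (@final_rat K Q n g (ex (tight_path s) n) eps) => //.
- have h15 : 15 < eps * M%:R.
    by move: hM; rewrite ltr_pdivrMr // mulrC.
  apply: (le_trans (ltW h15)); rewrite ler_pM2l // ler_nat; lia.
- have H := poly_nat hK hQ.
  have e5 : (K * Q * (K * Q - 1) * (K * Q - 2) = 'C(K * Q, 3) * 6)%N by rewrite bin3E.
  have a1 : (Q.+2 - 1 = Q + 1)%N by lia.
  have a2 : (Q.+2 - 2 = Q)%N by lia.
  have e6 : (Q * (Q + 1) * (Q + 2) = 'C(Q.+2, 3) * 6)%N.
    rewrite bin3E a1 a2 -addn2; ring.
  rewrite e5 e6 in H.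
  have H1 : (K * ('C(K * Q, 3) * 6) <= K * (6 * g) + K * (K ^ 2 * ('C(Q.+2, 3) * 6)))%N.
    rewrite -mulnDr leq_mul2l; apply/orP; right.
    have -> : (6 * g + K ^ 2 * ('C(Q.+2, 3) * 6) = (g + K * (K * 'C(Q.+2, 3))) * 6)%N by ring.
    by rewrite leq_mul2r hcount orbT.
  lia.
- have h3 : (n * (n - 1) * (n - 2) <= n * n * n)%N by rewrite !leq_mul ?leq_subr.
  apply: leq_trans h3 _.
  have -> : (K ^ 3 * (Q + 1) ^ 3 = (K * (Q + 1)) * (K * (Q + 1)) * (K * (Q + 1)))%N by ring.
  have h4 : (n <= K * (Q + 1))%N by rewrite addn1 ltnW.
  by rewrite !leq_mul.
Qed.
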